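(* Let $d,k,\ell,T$ be positive integers with $2k\le d$, let $\mathbf{X}_1,\dots,\mathbf{X}_T\in\mathbb{R}^{d\times\ell}$ and $t_1,\dots,t_T\in(0,1]$. Let $(\mathbf{H}^{(n)},\mathbf{Y}^{(n)},\boldsymbol{\Theta}^{(n)})_{n\ge 0}$ be the iterates produced by the Geodesic Subspace Estimation algorithm (described in the context) from any initialization with $[\mathbf{H}^{(0)}\ \mathbf{Y}^{(0)}]\in\mathrm{St}(d,2k)$ and $\boldsymbol{\Theta}^{(0)}$ real diagonal, and let $\mathbf{U}^{(n)}(t)=\mathbf{H}^{(n)}\cos(\boldsymbol{\Theta}^{(n)}t)+\mathbf{Y}^{(n)}\sin(\boldsymbol{\Theta}^{(n)}t)$. Then for every $n\ge 1$, $$\mathcal{L}(\mathbf{U}^{(n)})\le \mathcal{L}(\mathbf{U}^{(n-1)}),$$ i.e. the loss is monotonically non-increasing along the iterates.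
   Context: $\mathrm{St}(d,p)=\{\mathbf{Q}\in\mathbb{R}^{d\times p}:\mathbf{Q}^\top\mathbf{Q}=\mathbf{I}_p\}$. For $\mathbf{H},\mathbf{Y}\in\mathbb{R}^{d\times k}$ and a real diagonal $k\times k$ matrix $\boldsymbol{\Theta}=\mathrm{diag}(\theta_1,\dots,\theta_k)$, set $\mathbf{U}(t)=\mathbf{H}\cos(\boldsymbol{\Theta}t)+\mathbf{Y}\sin(\boldsymbol{\Theta}t)$ (matrix cosine/sine of a diagonal matrix act entrywise on the diagonal) and define the loss $$\mathcal{L}(\mathbf{U})=\mathcal{L}(\mathbf{H},\mathbf{Y},\boldsymbol{\Theta})=-\sum_{i=1}^T\|\mathbf{X}_i^\top\mathbf{U}(t_i)\|_F^2$$ (which, when $[\mathbf{H}\ \mathbf{Y}]\in\mathrm{St}(d,2k)$, equals $\min_{\mathbf{G}_i}\sum_i\|\mathbf{X}_i-\mathbf{U}(t_i)\mathbf{G}_i\|_F^2$ minus the constant $\sum_i\|\mathbf{X}_i\|_F^2$). For $a\in\mathbb{R},p>0$, $\mathrm{mod}(a,p)=a-p\lfloor a/p\rfloor\in[0,p)$; $\arctan2(y,x)$ is the angle of $(x,y)$ measured counter-clockwise from the positive $x$-axis. Algorithm (Geodesic Subspace Estimation), with $M\ge1$ inner iterations. For $n=1,2,\dots$: (i) ($\mathbf{H},\mathbf{Y}$ update) Let $\mathbf{U}_i=\mathbf{U}^{(n-1)}(t_i)$, $\mathbf{G}_i=\mathbf{U}_i^\top\mathbf{X}_i$, $\mathbf{M}=\sum_{i=1}^T[\mathbf{X}_i\mathbf{G}_i^\top\cos(\boldsymbol{\Theta}^{(n-1)}t_i)\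 \ \mathbf{X}_i\mathbf{G}_i^\top\sin(\boldsymbol{\Theta}^{(n-1)}t_i)]\in\mathbb{R}^{d\times 2k}$, take a thin SVD $\mathbf{M}=\mathbf{W}\boldsymbol{\Sigma}\mathbf{V}^\top$ and set $[\mathbf{H}^{(n)}\ \mathbf{Y}^{(n)}]=\mathbf{W}\mathbf{V}^\top$. (ii) ($\boldsymbol{\Theta}$ update) With $\mathbf{H}=\mathbf{H}^{(n)},\mathbf{Y}=\mathbf{Y}^{(n)}$, for each $j=1,\dots,k$ and $i=1,\dots,T$ put $\alpha_{i,j}=[\mathbf{H}^\top\mathbf{X}_i\mathbf{X}_i^\top\mathbf{H}]_{jj}$, $\beta_{i,j}=[\mathbf{Y}^\top\mathbf{X}_i\mathbf{X}_i^\top\mathbf{H}]_{jj}$, $\gamma_{i,j}=[\mathbf{Y}^\top\mathbf{X}_i\mathbf{X}_i^\top\mathbf{Y}]_{jj}$, $\phi_{i,j}=\arctan2(\beta_{i,j},(\alpha_{i,j}-\gamma_{i,j})/2)$, $r_{i,j}=\sqrt{((\alpha_{i,j}-\gamma_{i,j})/2)^2+\beta_{i,j}^2}$. Define $f'_{i,j}(\theta)=2r_{i,j}t_i\sin(2\theta t_i-\phi_{i,j})$ and the curvature $w_{i,j}(\theta)=f'_{i,j}(\theta)\big/\big(\mathrm{mod}(\theta-\tfrac{\phi_{i,j}}{2t_i}+\tfrac{\pi}{2t_i},\tfrac{2\pi}{2t_i})-\tfrac{\pi}{2t_i}\big)$ when the denominator is nonzero, and $w_{i,j}(\theta)=4t_i^2r_{i,j}$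 when $\theta\in\{(\phi_{i,j}+2\pi m)/(2t_i):m\in\mathbb{Z}\}$. Starting from $\theta_j^{(n,0)}=\theta_j^{(n-1)}$, for $m=1,\dots,M$ set $\theta_j^{(n,m)}=\theta_j^{(n,m-1)}-\frac{\sum_i f'_{i,j}(\theta_j^{(n,m-1)})}{\sum_i w_{i,j}(\theta_j^{(n,m-1)})}$ (with the convention $\theta_j^{(n,m)}=\theta_j^{(n,m-1)}$ if the denominator is $0$). Finally $\boldsymbol{\Theta}^{(n)}=\mathrm{diag}(\theta_1^{(n,M)},\dots,\theta_k^{(n,M)})$. *)

(* Defs.v *)
From HB Require Import structures.
From mathcomp Require Import all_boot all_order all_algebra.
From mathcomp Require Import all_classical all_reals all_analysis.
Set Implicit Arguments. Unset Strict Implicit. Unset Printing Implicit Defensive.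
Import Order.TTheory GRing.Theory Num.Theory.
Local Open Scope ring_scope.

Section GSE.
Variable R : realType.

Definition arctan2 (y x : R) : R :=
  if 0 < x then atan (y / x)
  else if x < 0 then (if 0 <= y then atan (y / x) + pi else atan (y / x) - pi)
  else if 0 < y then pi / 2 else if y < 0 then - (pi / 2) else 0.

Definition rmod (a p : R) : R := a - p * (Num.floor (a / p))%:~R.

Definition frob2 m n (A : 'M[R]_(m, n)) : R := \sum_i \sum_j (A i j) ^+ 2.

Definition stiefel d p (Q : 'M[R]_(d, p)) : Prop := Q^T *m Q = 1%:M.

Definition cosD k (th : 'rV[R]_k) (t : R) : 'M[R]_k :=
  diag_mx (\row_j cos (th 0 j * t)).
Definition sinD k (th : 'rV[R]_k) (t : R) : 'M[R]_k :=
  diag_mx (\row_j sin (th 0 j * t)).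

Definition Ugeo d k (H Y : 'M[R]_(d, k)) (th : 'rV[R]_k) (t : R) : 'M[R]_(d, k) :=
  H *m cosD th t + Y *m sinD th t.

Definition loss d k l T (X : 'I_T -> 'M[R]_(d, l)) (ts : 'I_T -> R)
  (H Y : 'M[R]_(d, k)) (th : 'rV[R]_k) : R :=
  - \sum_i frob2 ((X i)^T *m Ugeo H Y th (ts i)).

Definition Mmat d k l T (X : 'I_T -> 'M[R]_(d, l)) (ts : 'I_T -> R)
  (H Y : 'M[R]_(d, k)) (th : 'rV[R]_k) : 'M[R]_(d, k + k) :=
  \sum_i (let G := (Ugeo H Y th (ts i))^T *m X i in
          row_mx (X i *m G^T *m cosD th (ts i)) (X i *m G^T *m sinD th (ts i))).

Definition thin_svd d p (A W : 'M[R]_(d, p)) (S V : 'M[R]_p) : Prop :=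
  [/\ stiefel W, V^T *m V = 1%:M, is_diag_mx S,
      (forall i, 0 <= S i i) & A = W *m S *m V^T].

Definition alphaq d k l (X : 'M[R]_(d, l)) (H Y : 'M[R]_(d, k)) j : R :=
  (H^T *m X *m X^T *m H) j j.
Definition betaq d k l (X : 'M[R]_(d, l)) (H Y : 'M[R]_(d, k)) j : R :=
  (Y^T *m X *m X^T *m H) j j.
Definition gammaq d k l (X : 'M[R]_(d, l)) (H Y : 'M[R]_(d, k)) j : R :=
  (Y^T *m X *m X^T *m Y) j j.
Definition phiq d k l (X : 'M[R]_(d, l)) (H Y : 'M[R]_(d, k)) j : R :=
  arctan2 (betaq X H Y j) ((alphaq X H Y j - gammaq X H Y j) / 2).
Definition rq d k l (X : 'M[R]_(d, l)) (H Y : 'M[R]_(d, k)) j : R :=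
  Num.sqrt (((alphaq X H Y j - gammaq X H Y j) / 2) ^+ 2 + (betaq X H Y j) ^+ 2).

Definition fder d k l (X : 'M[R]_(d, l)) (t : R) (H Y : 'M[R]_(d, k)) j (th : R) : R :=
  2 * rq X H Y j * t * sin (2 * th * t - phiq X H Y j).

Definition wcurv d k l (X : 'M[R]_(d, l)) (t : R) (H Y : 'M[R]_(d, k)) j (th : R) : R :=
  let den := rmod (th - phiq X H Y j / (2 * t) + pi / (2 * t)) (2 * pi / (2 * t))
             - pi / (2 * t) in
  if den != 0 then fder X t H Y j th / den else 4 * t ^+ 2 * rq X H Y j.

Definition theta_step d k l T (X : 'I_T -> 'M[R]_(d, l)) (ts : 'I_T -> R)
  (H Y : 'M[R]_(d, k)) j (th : R) : R :=
  let num := \sum_i fder (X i) (ts i) H Y j th in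
  let den := \sum_i wcurv (X i) (ts i) H Y j th in
  if den == 0 then th else th - num / den.

Definition theta_update d k l T (X : 'I_T -> 'M[R]_(d, l)) (ts : 'I_T -> R)
  (Minner : nat) (H Y : 'M[R]_(d, k)) (th_prev : 'rV[R]_k) : 'rV[R]_k :=
  \row_j iter Minner (theta_step X ts H Y j) (th_prev 0 j).

Definition gse_iterates d k l T (X : 'I_T -> 'M[R]_(d, l)) (ts : 'I_T -> R)
  (Minner : nat) (H Y : nat -> 'M[R]_(d, k)) (th : nat -> 'rV[R]_k) : Prop :=
  forall n : nat, (1 <= n)%N ->
    (exists (W : 'M[R]_(d, k + k)) (S V : 'M[R]_(k + k)),
       thin_svd (Mmat X ts (H n.-1) (Y n.-1) (th n.-1)) W S V /\
       row_mx (H n) (Y n) = W *m V^T)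
    /\ th n = theta_update X ts Minner (H n) (Y n) (th n.-1).

End GSE.

(* Main.v *)
Require Import Defs.
From HB Require Import structures.
From mathcomp Require Import all_boot all_order all_algebra.
From mathcomp Require Import all_classical all_reals all_analysis.
From mathcomp Require Import ring lra.
Import Order.TTheory GRing.Theory Num.Theory numFieldNormedType.Exports.
Local Open Scope ring_scope.
Local Open Scope classical_set_scope.

Lemma mono_deriv {R : realType} (f df : R -> R) (a b : R) :
  a <= b -> (forall x, a <= x <= b -> is_derive x 1 f (df x)) ->
  (forall x, a < x < b -> 0 <= df x) -> f a <= f b.
Proof.
move=> ab hd hpos.
case: (ltgtP a b) ab => // [altb|->] _; last by [].
have cf : {within `[a, b], continuous f}.
  apply: (@continuous_in_subspaceT R R) => x; rewrite inE /= in_itv /= => xab.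
  apply: differentiable_continuous; apply/derivable1_diffP.
  by apply: ex_derive; apply: hd.
have [c cab E] : exists2 c, c \in `]a, b[%R & f b - f a = df c * (b - a).
  apply: MVT altb _ cf => x; rewrite in_itv /= => /andP[h1 h2].
  by apply: hd; rewrite !ltW.
rewrite -subr_ge0 E; apply: mulr_ge0; last by rewrite subr_ge0 ltW.
by apply: hpos; move: cab; rewrite in_itv.
Qed.

Lemma sin_le_id {R : realType} (y : R) : 0 <= y -> sin y <= y.
Proof.
move=> y0.
have := @mono_deriv R (id - sin) (fun x => 1 - cos x) 0 y y0.
rewrite /= !fctE sin0 subr0 subr_ge0; apply.
  by move=> x _; rewrite subr_ge0 cos_le1.
Qed.

Lemma sE {R : realType} (a b : R) : a *: b = a * b. Proof. by []. Qed.

Lemma cos_ge_quad {R : realType} (y : R) : 1 - y ^+ 2 / 2 <= cos y.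
Proof.
wlog y0 : y / 0 <= y.
  move=> H; case: (lerP 0 y) => [/H//|y0].
  by rewrite -cosN -sqrrN; apply: H; rewrite oppr_ge0 ltW.
have h := @mono_deriv R (cos + (2^-1 : R) \*: (id * id)) (fun x => x - sin x) 0 y y0.
have hd : forall x, 0 <= x <= y -> is_derive x 1 (cos + (2^-1 : R) \*: (id * id)) (x - sin x).
  by move=> x _; apply: is_derive_eq; rewrite !sE mulr1; lra.
have hp : forall x, 0 < x < y -> 0 <= x - sin x.
  by move=> x /andP[x0 _]; rewrite subr_ge0 sin_le_id // ltW.
have := h hd hp.
rewrite !fctE /= !sE cos0 mul0r mulr0 addr0 expr2; lra.

Qed.

Lemma mono_deriv_dec {R : realType} (f df : R -> R) (a b : R) :
  a <= b -> (forall x, a <= x <= b -> is_derive x 1 f (df x)) ->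
  (forall x, a < x < b -> df x <= 0) -> f b <= f a.
Proof.
move=> ab hd hn.
have := @mono_deriv R (- f) (fun x => - df x) a b ab.
rewrite !fctE lerN2; apply.
  by move=> x hx; apply: is_deriveN; apply: hd.
by move=> x hx; rewrite oppr_ge0; apply: hn.
Qed.

Lemma xcos_le_sin {R : realType} (y : R) : 0 <= y <= pi -> y * cos y <= sin y.
Proof.
move=> /andP[y0 ypi].
have := @mono_deriv R (sin - id * cos) (fun x => x * sin x) 0 y y0.
rewrite !fctE /= sin0 mul0r subr0 subr_ge0; apply.
  move=> x _; apply: is_derive_eq; rewrite !sE; ring.
move=> x /andP[x0 xy]; apply: mulr_ge0; first exact: ltW.
by apply: sin_ge0_pi; rewrite ltW //= (le_trans (ltW xy)).
Qed.

Lemma sinc_decr {R : realType} (y z : R) : 0 < y -> y <= z -> z <= pi ->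
  y * sin z <= z * sin y.
Proof.
move=> y0 yz zpi.
have hd : forall x, y <= x <= z ->
   is_derive x 1 (sin * (fun u => (@id R u)^-1))
     (sin x * (- x ^- 2) + x^-1 * cos x).
  move=> x /andP[yx _].
  have x0 : 0 < x by apply: lt_le_trans yx.
  have hv := @is_deriveV R id x 1 1 (lt0r_neq0 x0) (is_derive_id x 1).
  apply: is_derive_eq (is_deriveM (is_derive_sin x) hv) _.
  by rewrite !sE mulr1.
have := @mono_deriv_dec R _ _ y z yz hd.
rewrite !fctE /=.
move=> H.
have : sin z * z^-1 <= sin y * y^-1.
  apply: H => x /andP[yx xz].
  have x0 : 0 < x by apply: lt_trans yx.
  have := @xcos_le_sin R x; rewrite ltW //= (le_trans (ltW xz)) // => /(_ isT) hx.
  have -> : sin x * - x ^- 2 + x^-1 * cos x = (x * cos x - sin x) / x ^+ 2.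
    by field; rewrite lt0r_neq0.
  by apply: mulr_le0_ge0; rewrite ?subr_le0 // invr_ge0 exprn_ge0 // ltW.
have z0 : 0 < z by apply: lt_le_trans yz.
rewrite -(ler_pM2r (mulr_gt0 y0 z0)).
have -> : sin z * z^-1 * (y * z) = y * sin z by field; rewrite lt0r_neq0.
have -> : sin y * y^-1 * (y * z) = z * sin y by field; rewrite lt0r_neq0.
by [].
Qed.

Lemma maj_pos {R : realType} (z y : R) : 0 < z -> z <= pi -> 0 <= y ->
  cos z + sin z / (2 * z) * z ^+ 2 <= cos y + sin z / (2 * z) * y ^+ 2.
Proof.
move=> z0 zpi y0.
set c := sin z / (2 * z).
have c0 : 0 <= c.
  apply: divr_ge0; first by apply: sin_ge0_pi; rewrite ltW.
  by apply: mulr_ge0 => //; apply: ltW.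
have hd : forall x : R, is_derive x 1 (cos + c \*: (id * id)) (c * (x + x) - sin x).
  by move=> x; apply: is_derive_eq; rewrite !sE mulr1; ring.
have key : forall y, z <= y -> y <= pi ->
    cos z + c * z ^+ 2 <= cos y + c * y ^+ 2.
  move=> w zw wpi.
  have := @mono_deriv R _ _ z w zw (fun x _ => hd x).
  rewrite !fctE /= !sE -!expr2; apply => x /andP[zx xw].
  have x0 : 0 < x by apply: lt_trans zx.
  have := @sinc_decr R z x z0 (ltW zx) (le_trans (ltW xw) wpi).
  rewrite /c => h.
  have -> : sin z / (2 * z) * (x + x) = x * sin z / z by field; rewrite lt0r_neq0.
  rewrite subr_ge0 ler_pdivlMr //; lra.
case: (lerP y z) => [yz|zy].
  have := @mono_deriv_dec R _ _ y z yz (fun x _ => hd x).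
  rewrite !fctE /= !sE -!expr2; apply => x /andP[yx xz].
  have x0 : 0 < x by apply: le_lt_trans yx.
  have := @sinc_decr R x z x0 (ltW xz) zpi.
  rewrite /c => h.
  have -> : sin z / (2 * z) * (x + x) = x * sin z / z by field; rewrite lt0r_neq0.
  rewrite subr_le0 ler_pdivrMr //; lra.
case: (lerP y pi) => [ypi|piy]; first by apply: key => //; rewrite ltW.
apply: le_trans (key pi zpi (lexx _)) _.
rewrite cospi; apply: lerD; first exact: cos_geN1.
apply: ler_wpM2l => //; rewrite ler_sqr ?nnegrE ?pi_ge0 ?ltW //.
exact: lt_trans z0 zy.
Qed.

Lemma maj_core {R : realType} (z y : R) : - pi <= z -> z <= pi -> z != 0 ->
  cos z + sin z / (2 * z) * z ^+ 2 <= cos y + sin z / (2 * z) * y ^+ 2.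
Proof.
move=> z1 z2 zn0.
wlog y0 : y / 0 <= y.
  move=> H; case: (lerP 0 y) => [/H//|y0].
  by rewrite -(cosN y) -(sqrrN y); apply: H; rewrite oppr_ge0 ltW.
case: (ltgtP 0 z) zn0 => // [z0|z0] _; first by apply: maj_pos.
have := @maj_pos R (- z) y; rewrite oppr_gt0 z0 -lerNl => /(_ isT z1 y0).
have -> : sin (- z) / (2 * - z) = sin z / (2 * z) by rewrite sinN mulrN invrN mulrNN.
by rewrite cosN sqrrN.
Qed.

Lemma cos_per {R : realType} (x : R) (m : int) : cos (x + 2 * pi * m%:~R) = cos x.
Proof.
have P : forall (y : R) n, cos (y + 2 * pi * n%:R) = cos y.
  move=> y n; have := @periodicn R R cos (pi *+ 2) (@cosD2pi R) n y.
  move=> <-; congr (_ (_ + _)); rewrite -mulrnA -[RHS]mulr_natr natrM; ring.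
case: m => n; first by rewrite P.
rewrite NegzE mulrNz mulrN -(P (x - 2 * pi * (n.+1)%:R) n.+1) /=.
by rewrite subrK.
Qed.

Lemma sin_per {R : realType} (x : R) (m : int) : sin (x + 2 * pi * m%:~R) = sin x.
Proof.
have P : forall (y : R) n, sin (y + 2 * pi * n%:R) = sin y.
  move=> y n; have := @periodicn R R sin (pi *+ 2) (@sinD2pi R) n y.
  move=> <-; congr (_ (_ + _)); rewrite -mulrnA -[RHS]mulr_natr natrM; ring.
case: m => n; first by rewrite P.
rewrite NegzE mulrNz mulrN -(P (x - 2 * pi * (n.+1)%:R) n.+1) /=.
by rewrite subrK.
Qed.

Definition fd_s {R : realType} (r phi t th : R) : R := 2 * r * t * sin (2 * th * t - phi).
Definition w_s {R : realType} (r phi t th : R) : R :=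
  let den := rmod (th - phi / (2 * t) + pi / (2 * t)) (2 * pi / (2 * t))
             - pi / (2 * t) in
  if den != 0 then fd_s r phi t th / den else 4 * t ^+ 2 * r.

Lemma reduce_angle {R : realType} (phi t th : R) : 0 < t ->
  let den := rmod (th - phi / (2 * t) + pi / (2 * t)) (2 * pi / (2 * t))
             - pi / (2 * t) in
  [/\ - pi <= 2 * t * den, 2 * t * den < pi &
      exists m : int, 2 * th * t - phi = 2 * t * den + 2 * pi * m%:~R].
Proof.
move=> t0 den.
set a := th - phi / (2 * t) + pi / (2 * t).
set p := 2 * pi / (2 * t).
have p0 : 0 < p by rewrite /p divr_gt0 ?mulr_gt0 ?pi_gt0.
have hf1 := floor_le (a / p).
have hf2 := floorD1_gt (a / p).
rewrite intrD in hf2.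
set m := Num.floor (a / p) in hf1 hf2.
have denE : den = a - p * m%:~R - pi / (2 * t) by [].
have tn0 : t != 0 by rewrite lt0r_neq0.
have t2 : 2 * t != 0 by rewrite mulf_neq0.
have e1 : 2 * t * den = 2 * t * a - 2 * pi * m%:~R - pi.
  by rewrite denE /p; field; rewrite ?tn0.
have e2 : 2 * t * a = 2 * th * t - phi + pi by rewrite /a; field; rewrite ?tn0.
have h1 : p * m%:~R <= a by rewrite mulrC -ler_pdivlMr.
have h2 : a < p * m%:~R + p.
  by rewrite -[X in _ + X]mulr1 -mulrDr mulrC -ltr_pdivrMr.
have hpa : 2 * t * (p * m%:~R) = 2 * pi * m%:~R by rewrite /p; field; rewrite ?tn0.
have hp : 2 * t * p = 2 * pi by rewrite /p; field; rewrite ?tn0.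
have tt : 0 < 2 * t by rewrite mulr_gt0.
have H1 : 2 * t * (p * m%:~R) <= 2 * t * a by rewrite ler_pM2l.
have H2 : 2 * t * a < 2 * t * (p * m%:~R) + 2 * t * p by rewrite -mulrDr ltr_pM2l.
rewrite hpa in H1 H2; rewrite hp in H2.
split.
- rewrite e1; lra.
- rewrite e1; lra.
- exists m; rewrite e1 e2; ring.
Qed.

Lemma maj_theta {R : realType} (r phi t th th' : R) : 0 <= r -> 0 < t ->
  0 <= w_s r phi t th /\
  - r * cos (2 * th' * t - phi) <=
  - r * cos (2 * th * t - phi) + fd_s r phi t th * (th' - th)
  + w_s r phi t th / 2 * (th' - th) ^+ 2.
Proof.
move=> r0 t0.
have [h1 h2 [m em]] := @reduce_angle R phi t th t0.
rewrite /w_s /fd_s.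
set den := rmod _ _ - _ in h1 h2 em *.
have tn0 : t != 0 by rewrite lt0r_neq0.
set z := 2 * t * den in h1 h2 em.
have e' : 2 * th' * t - phi = (z + 2 * t * (th' - th)) + 2 * pi * m%:~R.
  have -> : 2 * th' * t - phi = (2 * th * t - phi) + 2 * t * (th' - th) by ring.
  by rewrite em; ring.
rewrite e' em !cos_per sin_per.
set s := th' - th.
case: eqP => [d0|/eqP dn0] /=.
  have z0 : z = 0 by rewrite /z d0 mulr0.
  rewrite z0 sin0 cos0 !mulr0 !mul0r !add0r.
  split; first by rewrite mulr_ge0 // mulr_ge0 // sqr_ge0.
  have h := ler_wpM2l r0 (cos_ge_quad (2 * t * s)).
  rewrite !mulNr; lra.
have zn0 : z != 0 by rewrite /z mulf_neq0 // mulf_neq0.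
split.
  rewrite -mulrA; apply: mulr_ge0; first by rewrite !mulr_ge0 // ltW.
  case: (ltgtP 0 den) dn0 => // [dp|dn] _.
    apply: divr_ge0; last exact: ltW.
    by apply: sin_ge0_pi; rewrite ltW ?ltW // /z mulr_gt0 // mulr_gt0.
  rewrite -(mulrNN (sin z)) -invrN; apply: divr_ge0; last by rewrite oppr_ge0 ltW.
  rewrite -sinN; apply: sin_ge0_pi; rewrite lerNl h1 andbT oppr_ge0.
  by rewrite /z pmulr_rle0 ?mulr_gt0 // ltW.
have := @maj_core R z (z + 2 * t * s) h1 (ltW h2) zn0.
move=> h.
have E : - cos (z + 2 * t * s) <= - cos z + sin z * (2 * t * s) + sin z / (2 * z) * (2 * t * s) ^+ 2.
  have -> : - cos z + sin z * (2 * t * s) + sin z / (2 * z) * (2 * t * s) ^+ 2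
      = - cos z + sin z / (2 * z) * ((z + 2 * t * s) ^+ 2 - z ^+ 2).
    by field.
  lra.
have := ler_wpM2l r0 E.
move=> E'; apply: le_trans (_ : r * (- cos z + sin z * (2 * t * s) + sin z / (2 * z) * (2 * t * s) ^+ 2) <= _).
  by rewrite mulNr -mulrN.
rewrite [X in X <= _](_ : _ = - r * cos z + 2 * r * t * sin z * s + 2 * r * t * sin z / den / 2 * s ^+ 2) //.
rewrite /z; field; rewrite ?tn0 ?dn0 //.
Qed.

Lemma step_decr {R : realType} (T : nat) (r phi ts : 'I_T -> R) (th : R) :
  (forall i, 0 <= r i) -> (forall i, 0 < ts i) ->
  forall (F : R -> R) G W, (forall x, F x = \sum_i - r i * cos (2 * x * ts i - phi i)) ->
  G = \sum_i fd_s (r i) (phi i) (ts i) th ->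
  W = \sum_i w_s (r i) (phi i) (ts i) th ->
  F (if W == 0 then th else th - G / W) <= F th.
Proof.
move=> r0 t0 F G W hF hG hW.
have maj : forall th', F th' <= F th + G * (th' - th) + W / 2 * (th' - th) ^+ 2.
  move=> th'; rewrite !hF hG hW !mulr_suml -!big_split /=.
  by apply: ler_sum => i _; have [_ h] := maj_theta (r i) (phi i) (ts i) th th' (r0 i) (t0 i).
have W0 : 0 <= W by rewrite hW; apply: sumr_ge0 => i _; have [h _] := maj_theta (r i) (phi i) (ts i) th th (r0 i) (t0 i).
case: eqP => [//|/eqP Wn0].
apply: le_trans (maj _) _.
have Wp : 0 < W by rewrite lt_def Wn0 W0.
rewrite -addrA.
have -> : G * (th - G / W - th) + W / 2 * (th - G / W - th) ^+ 2 = - (G ^+ 2 / (2 * W)).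
  by field.
by rewrite -[X in _ <= X]addr0 lerD2l oppr_le0 divr_ge0 ?sqr_ge0 // mulr_ge0 // ltW.
Qed.

Lemma iter_decr {R : realType} (f F : R -> R) (n : nat) (x : R) :
  (forall y, F (f y) <= F y) -> F (iter n f x) <= F x.
Proof.
move=> h; elim: n => [|n IH] //=; exact: le_trans (h _) IH.
Qed.

Lemma mul4 {R : realType} (a b c d : R) : a * b * (c * d) = a * c * (b * d).
Proof. by ring. Qed.

Lemma sin_atan' {R : realType} (u : R) : sin (atan u) = u * cos (atan u).
Proof.
have c0 : cos (atan u) != 0.
  by rewrite cos_atan invr_neq0 // lt0r_neq0 // sqrtr_gt0 ltr_pwDl ?ltr01 ?sqr_ge0.
have E := atanK u; rewrite /tan in E; rewrite -{2}E divfK //.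
Qed.

Lemma sqrt_split {R : realType} (x y : R) : x != 0 ->
  Num.sqrt (x ^+ 2 + y ^+ 2) = `|x| * Num.sqrt (1 + (y / x) ^+ 2).
Proof.
move=> xn0.
have -> : x ^+ 2 + y ^+ 2 = x ^+ 2 * (1 + (y / x) ^+ 2) by field.
by rewrite sqrtrM ?sqr_ge0 // sqrtr_sqr.
Qed.

Lemma arctan2_polar {R : realType} (y x : R) :
  Num.sqrt (x ^+ 2 + y ^+ 2) * cos (arctan2 y x) = x /\
  Num.sqrt (x ^+ 2 + y ^+ 2) * sin (arctan2 y x) = y.
Proof.
rewrite /arctan2.
have cA : forall u : R, Num.sqrt (1 + u ^+ 2) * cos (atan u) = 1.
  move=> u; rewrite cos_atan divff // lt0r_neq0 // sqrtr_gt0.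
  by rewrite ltr_pwDl ?ltr01 ?sqr_ge0.
case: (ltrP 0 x) => [xp|xn].
  rewrite sqrt_split ?lt0r_neq0 // ger0_norm ?ltW // -mulrA cA mulr1; split => //.
  by rewrite sin_atan' mul4 cA mulr1 mulrC divfK // lt0r_neq0.
case: (ltrP x 0) => [xn'|xp].
  have xn0 : x != 0 by rewrite ltr0_neq0.
  have Q : - x * Num.sqrt (1 + (y / x) ^+ 2) * - cos (atan (y / x)) = x /\
           - x * Num.sqrt (1 + (y / x) ^+ 2) * - sin (atan (y / x)) = y.
    rewrite sin_atan'; have c1 := cA (y / x).
    move: c1; set S := Num.sqrt _; set C := cos _ => c1.
    split.
      rewrite (_ : - x * S * - C = x * (S * C)); last by ring.
      by rewrite c1 mulr1.
    rewrite (_ : - x * S * - (y / x * C) = x * (y / x) * (S * C)); last by ring.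
    by rewrite c1 mulr1 mulrC divfK.
  case: (lerP 0 y) => _.
    by rewrite sinDpi cosDpi sqrt_split // ltr0_norm.
  have P : forall a : R, sin (a - pi) = - sin a /\ cos (a - pi) = - cos a.
    move=> a; have := sinDpi (a - pi); have := cosDpi (a - pi).
    by rewrite subrK => -> ->; rewrite !opprK.
  have [-> ->] := P (atan (y / x)).
  by rewrite sqrt_split // ltr0_norm.
have x0 : x = 0 by apply/eqP; rewrite eq_le xn xp.
rewrite x0 expr0n /= add0r sqrtr_sqr.
case: (ltrP 0 y) => [yp|yn].
  by rewrite cos_pihalf sin_pihalf mulr0 mulr1 gtr0_norm.
case: (ltrP y 0) => [yn'|yp].
  by rewrite cosN sinN cos_pihalf sin_pihalf mulr0 mulrN1 ltr0_norm // opprK.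
have -> : y = 0 by apply/eqP; rewrite eq_le yn yp.
by rewrite normr0 !mul0r.
Qed.

Lemma quad_trig {R : realType} (al be ga x : R) :
  al * cos x ^+ 2 + 2 * be * cos x * sin x + ga * sin x ^+ 2 =
  (al + ga) / 2 + Num.sqrt (((al - ga) / 2) ^+ 2 + be ^+ 2) *
     cos (2 * x - arctan2 be ((al - ga) / 2)).
Proof.
have [h1 h2] := arctan2_polar be ((al - ga) / 2).
move: h1 h2; set S := Num.sqrt _; set p := arctan2 _ _ => h1 h2.
rewrite cosB (_ : S * (cos (2 * x) * cos p + sin (2 * x) * sin p) =
   cos (2 * x) * (S * cos p) + sin (2 * x) * (S * sin p)); last by ring.
rewrite h1 h2.
have -> : 2 * x = x *+ 2 by rewrite mulr_natl.
rewrite cos_mulr2n sin_mulr2n sin2cos2.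
by rewrite !mulr2n; field.
Qed.

Lemma trmul_entry {R : realType} m n p (A : 'M[R]_(m, n)) (B : 'M[R]_(m, p)) i j :
  (A^T *m B) i j = \sum_a A a i * B a j.
Proof. by rewrite !mxE; apply: eq_bigr => a _; rewrite mxE. Qed.

Lemma alpha_sum {R : realType} d k l (X : 'M[R]_(d, l)) (H Y : 'M[R]_(d, k)) j :
  alphaq X H Y j = \sum_a ((X^T *m H) a j) ^+ 2.
Proof.
rewrite /alphaq -!mulmxA mulmxA -[H^T *m X](trmxK) trmx_mul trmxK trmul_entry.
by apply: eq_bigr => a _; rewrite expr2.
Qed.

Lemma gamma_sum {R : realType} d k l (X : 'M[R]_(d, l)) (H Y : 'M[R]_(d, k)) j :
  gammaq X H Y j = \sum_a ((X^T *m Y) a j) ^+ 2.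
Proof.
rewrite /gammaq -!mulmxA mulmxA -[Y^T *m X](trmxK) trmx_mul trmxK trmul_entry.
by apply: eq_bigr => a _; rewrite expr2.
Qed.

Lemma beta_sum {R : realType} d k l (X : 'M[R]_(d, l)) (H Y : 'M[R]_(d, k)) j :
  betaq X H Y j = \sum_a (X^T *m Y) a j * (X^T *m H) a j.
Proof.
by rewrite /betaq -!mulmxA mulmxA -[Y^T *m X](trmxK) trmx_mul trmxK trmul_entry.
Qed.

Lemma frob_cols {R : realType} d k l (X : 'M[R]_(d, l)) (H Y : 'M[R]_(d, k)) th t :
  frob2 (X^T *m Ugeo H Y th t) =
  \sum_j (alphaq X H Y j * cos (th 0 j * t) ^+ 2
          + 2 * betaq X H Y j * cos (th 0 j * t) * sin (th 0 j * t)
          + gammaq X H Y j * sin (th 0 j * t) ^+ 2).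
Proof.
rewrite /frob2 exchange_big /=; apply: eq_bigr => j _.
rewrite alpha_sum beta_sum gamma_sum big_distrr /= !big_distrl /= -!big_split /=.
apply: eq_bigr => a _.
rewrite /Ugeo mulmxDr !mulmxA /cosD /sinD !mul_mx_diag !mxE.
ring.
Qed.

Lemma loss_theta_form {R : realType} d k l T (X : 'I_T -> 'M[R]_(d, l)) (ts : 'I_T -> R)
  (H Y : 'M[R]_(d, k)) (th : 'rV[R]_k) :
  loss X ts H Y th = \sum_j (\sum_i - ((alphaq (X i) H Y j + gammaq (X i) H Y j) / 2)
     + \sum_i - rq (X i) H Y j * cos (2 * th 0 j * ts i - phiq (X i) H Y j)).
Proof.
rewrite /loss.
under eq_bigr do rewrite frob_cols.
rewrite exchange_big /= -sumrN; apply: eq_bigr => j _.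
rewrite -big_split -sumrN /=; apply: eq_bigr => i _.
rewrite quad_trig /rq /phiq opprD mulNr -(mulrA 2).
by [].
Qed.

Lemma theta_part {R : realType} d k l T (X : 'I_T -> 'M[R]_(d, l)) (ts : 'I_T -> R)
  (Minner : nat) (H Y : 'M[R]_(d, k)) (thp : 'rV[R]_k) : (forall i, 0 < ts i) ->
  loss X ts H Y (theta_update X ts Minner H Y thp) <= loss X ts H Y thp.
Proof.
move=> t0; rewrite !loss_theta_form; apply: ler_sum => j _; rewrite lerD2l mxE.
apply: (@iter_decr R _ (fun x => \sum_i - rq (X i) H Y j * cos (2 * x * ts i - phiq (X i) H Y j))).
move=> y; rewrite /theta_step /=.
apply: (@step_decr R T (fun i => rq (X i) H Y j) (fun i => phiq (X i) H Y j) ts y _ t0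
  (fun x => \sum_i - rq (X i) H Y j * cos (2 * x * ts i - phiq (X i) H Y j))
  (\sum_i fder (X i) (ts i) H Y j y) (\sum_i wcurv (X i) (ts i) H Y j y)) => //.
by move=> i; apply: sqrtr_ge0.
Qed.

Lemma frob2_tr {R : realType} {m n} (A : 'M[R]_(m, n)) : frob2 A = \tr (A^T *m A).
Proof.
rewrite /frob2 /mxtrace exchange_big /=; apply: eq_bigr => j _.
by rewrite trmul_entry; apply: eq_bigr => a _; rewrite expr2.
Qed.

Lemma frob2_ge0 {R : realType} {m n} (A : 'M[R]_(m, n)) : 0 <= frob2 A.
Proof. by apply: sumr_ge0 => i _; apply: sumr_ge0 => j _; apply: sqr_ge0. Qed.

Lemma frob_lin {R : realType} {m n} (A B : 'M[R]_(m, n)) :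
  2 * \tr (A^T *m B) - frob2 A <= frob2 B.
Proof.
have h := frob2_ge0 (B - A).
rewrite !frob2_tr in h *.
rewrite !raddfB /= !mulmxBl !raddfB /= in h.
have e : \tr (B^T *m A) = \tr (A^T *m B) by rewrite -mxtrace_tr trmx_mul trmxK.
rewrite e in h; lra.
Qed.

Lemma diag_tr {R : realType} {p} (S N : 'M[R]_p) : is_diag_mx S ->
  \tr (S^T *m N) = \sum_q S q q * N q q.
Proof.
move=> /is_diag_mxP Sd; rewrite /mxtrace; apply: eq_bigr => q _.
rewrite trmul_entry (bigD1 q) //= big1 ?addr0 // => a aq.
by rewrite Sd ?mul0r //.
Qed.

Lemma entry_le1 {R : realType} {d p} (W Q : 'M[R]_(d, p)) (V : 'M[R]_p) q :
  W^T *m W = 1%:M -> Q^T *m Q = 1%:M -> V^T *m V = 1%:M ->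
  (W^T *m Q *m V) q q <= 1.
Proof.
move=> hW hQ hV.
have e1 : \sum_a W a q ^+ 2 = 1.
  have : (W^T *m W) q q = 1 by rewrite hW mxE eqxx.
  by rewrite trmul_entry => <-; apply: eq_bigr => a _; rewrite expr2.
have e2 : \sum_a (Q *m V) a q ^+ 2 = 1.
  have : ((Q *m V)^T *m (Q *m V)) q q = 1.
    by rewrite trmx_mul -mulmxA (mulmxA Q^T) hQ mul1mx hV mxE eqxx.
  by rewrite trmul_entry => <-; apply: eq_bigr => a _; rewrite expr2.
rewrite -mulmxA trmul_entry.
have : \sum_a 2 * (W a q * (Q *m V) a q) <= \sum_a (W a q ^+ 2 + (Q *m V) a q ^+ 2).
  apply: ler_sum => a _.
  have := sqr_ge0 (W a q - (Q *m V) a q); lra.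
rewrite big_split /= e1 e2 -mulr_sumr; lra.
Qed.

Lemma svd_tr {R : realType} {d p} (M W Q : 'M[R]_(d, p)) (S V : 'M[R]_p) :
  is_diag_mx S -> M = W *m S *m V^T ->
  \tr (M^T *m Q) = \sum_q S q q * (W^T *m Q *m V) q q.
Proof.
move=> Sd ->; rewrite !trmx_mul trmxK -!mulmxA mxtrace_mulC -!mulmxA.
by rewrite diag_tr // !mulmxA.
Qed.

Definition Bmat {R : realType} {k} (th : 'rV[R]_k) (t : R) : 'M[R]_(k + k, k) :=
  col_mx (Defs.cosD th t) (Defs.sinD th t).

Lemma Ugeo_Q {R : realType} {d k} (H Y : 'M[R]_(d, k)) th t :
  Ugeo H Y th t = row_mx H Y *m Bmat th t.
Proof. by rewrite /Bmat mul_row_col. Qed.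

Lemma Mmat_tr {R : realType} {d k l T} (X : 'I_T -> 'M[R]_(d, l)) (ts : 'I_T -> R)
  (H Y : 'M[R]_(d, k)) th (Q : 'M[R]_(d, k + k)) :
  \tr ((Mmat X ts H Y th)^T *m Q) =
  \sum_i \tr (((X i)^T *m Ugeo H Y th (ts i))^T *m ((X i)^T *m (Q *m Bmat th (ts i)))).
Proof.
rewrite /Mmat raddf_sum mulmx_suml raddf_sum; apply: eq_bigr => i _ /=.
set U := Ugeo H Y th (ts i).
rewrite -mul_mx_row trmx_mul tr_row_mx /Defs.cosD /Defs.sinD !tr_diag_mx.
rewrite -/(Defs.cosD th (ts i)) -/(Defs.sinD th (ts i)) -/(Bmat th (ts i)).
rewrite -mulmxA mxtrace_mulC -mulmxA.
by rewrite !trmx_mul !trmxK !mulmxA.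
Qed.

Lemma hy_part {R : realType} {d k l T} (X : 'I_T -> 'M[R]_(d, l)) (ts : 'I_T -> R)
  (H0 Y0 H1 Y1 : 'M[R]_(d, k)) th (W : 'M[R]_(d, k + k)) (S V : 'M[R]_(k + k)) :
  stiefel (row_mx H0 Y0) -> thin_svd (Mmat X ts H0 Y0 th) W S V ->
  row_mx H1 Y1 = W *m V^T ->
  loss X ts H1 Y1 th <= loss X ts H0 Y0 th.
Proof.
move=> hQ [hW hV Sd Spos hM] hQ1.
set M := Mmat X ts H0 Y0 th in hM.
have t0 : \tr (M^T *m row_mx H0 Y0) =
    \sum_i frob2 ((X i)^T *m Ugeo H0 Y0 th (ts i)).
  by rewrite Mmat_tr; apply: eq_bigr => i _; rewrite -Ugeo_Q frob2_tr.
have t1 : \tr (M^T *m row_mx H1 Y1) =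
    \sum_i \tr (((X i)^T *m Ugeo H0 Y0 th (ts i))^T *m ((X i)^T *m Ugeo H1 Y1 th (ts i))).
  by rewrite Mmat_tr; apply: eq_bigr => i _; rewrite -Ugeo_Q.
have c0 : \tr (M^T *m row_mx H0 Y0) <= \tr (M^T *m row_mx H1 Y1).
  rewrite (svd_tr _ _ (row_mx H0 Y0) _ _ Sd hM) (svd_tr _ _ (row_mx H1 Y1) _ _ Sd hM); apply: ler_sum => q _.
  rewrite hQ1 -mulmxA mulmxA (mulmxA W^T) hW mul1mx hV [X in _ <= _ * X]mxE eqxx mulr1.
  by rewrite -[X in _ <= X]mulr1; apply: ler_wpM2l => //; apply: entry_le1.
rewrite /loss lerN2.
have h : \sum_i (2 * \tr (((X i)^T *m Ugeo H0 Y0 th (ts i))^T *m ((X i)^T *m Ugeo H1 Y1 th (ts i)))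
     - frob2 ((X i)^T *m Ugeo H0 Y0 th (ts i))) <= \sum_i frob2 ((X i)^T *m Ugeo H1 Y1 th (ts i)).
  by apply: ler_sum => i _; apply: frob_lin.
rewrite sumrB -mulr_sumr -t1 -t0 in h.
apply: le_trans h; lra.
Qed.

Lemma stiefel_svd {R : realType} {d p} (W : 'M[R]_(d, p)) (V : 'M[R]_p) :
  stiefel W -> V^T *m V = 1%:M -> stiefel (W *m V^T).
Proof.
move=> hW hV; rewrite /stiefel trmx_mul trmxK -mulmxA (mulmxA W^T) hW mul1mx.
exact: mulmx1C.
Qed.

Theorem theorem1 (R : realType) (d k l T Minner : nat)
  (hd : (0 < d)%N) (hk : (0 < k)%N) (hl : (0 < l)%N) (hT : (0 < T)%N)
  (hM : (1 <= Minner)%N) (hkd : (2 * k <= d)%N)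
  (X : 'I_T -> 'M[R]_(d, l)) (ts : 'I_T -> R)
  (hts : forall i, 0 < ts i <= 1)
  (H Y : nat -> 'M[R]_(d, k)) (th : nat -> 'rV[R]_k)
  (hinit : stiefel (row_mx (H 0%N) (Y 0%N)))
  (hiter : gse_iterates X ts Minner H Y th) :
  forall n : nat, (1 <= n)%N ->
    loss X ts (H n) (Y n) (th n) <= loss X ts (H n.-1) (Y n.-1) (th n.-1).
Proof.
move=> n hn.
have t0 : forall i, 0 < ts i by move=> i; case/andP: (hts i).
have [[W [S [V [hsvd hQ]]]] hth] := hiter n hn.
have st : stiefel (row_mx (H n.-1) (Y n.-1)).
  case: n hn hsvd hQ hth => [//|[|m]] _ _ _ _ //=.
  have [[W' [S' [V' [[hW' hV' _ _ _] hQ']]]] _] := hiter m.+1 isT.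
  by rewrite hQ'; apply: stiefel_svd.
rewrite hth; apply: le_trans (@theta_part R _ _ _ _ X ts Minner (H n) (Y n) (th n.-1) t0) _.
exact: hy_part st hsvd hQ.
Qed.
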